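(* For the hypergeometric weights described in the context, the step-line recursion coefficients satisfy \begin{align*} \alpha&=(\vartheta H)H^{-1}=\mathfrak a_{+}S^{[1]}-S^{[1]},\\ \beta&=-\vartheta S^{[1]}=\mathfrak a_{+}S^{[2]}-S^{[2]}-S^{[1]}\mathfrak a_{-}\big((\vartheta H)H^{-1}\big),\\ \gamma&=-\vartheta S^{[2]}+(\vartheta\mathfrak a_{-}S^{[1]})S^{[1]}=H^{-1}\mathfrak a^2_{-}H. \end{align*}
   Context: Weights on $\mathbb N_0$: $w^{(a)}(k)=\frac{(b^{(a)}_1)_k\cdots(b^{(a)}_{M^{(a)}})_k}{(c_1)_k\cdots(c_N)_k}\frac{(\eta^{(a)})^k}{k!}$, $a\in\{1,2\}$, convergent series. Moment matrix (indices from 0): $\mathscr M_{n,2m}=\sum_k k^{n+m}w^{(1)}(k)$, $\mathscr M_{n,2m+1}=\sum_k k^{n+m}w^{(2)}(k)$, with all leading principal minors nonzero, so $\mathscr M=S^{-1}H\tilde S^{-\top}$ ($S,\tilde S$ lower unitriangular, $H$ diagonal), depending on $(\eta^{(1)},\eta^{(2)})$. $\Lambda$ has ones on the first superdiagonal; $S=I+\Lambda^\top S^{[1]}+(\Lambda^\top)^2S^{[2]}+\cdots$ with diagonal $S^{[k]}$; $S\Lambda S^{-1}=(\Lambda^\top)^2\gamma+\Lambda^\top\beta+\alpha+\Lambda$ with diagonal $\alpha,\beta,\gamma$. $\mathfrak a_-\operatorname{diag}(m_0,m_1,\dots)=\operatorname{diag}(m_1,m_2,\dots)$, $\mathfrak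 a_+\operatorname{diag}(m_0,m_1,\dots)=\operatorname{diag}(0,m_0,m_1,\dots)$. $\vartheta=\eta^{(1)}\partial/\partial\eta^{(1)}+\eta^{(2)}\partial/\partial\eta^{(2)}$. *)

(* Defs.v *)
From Stdlib Require Import Reals.
From Coquelicot Require Import Coquelicot.

Set Implicit Arguments.
Unset Strict Implicit.
Unset Printing Implicit Defensive.

(** Semi-infinite matrices (rows/columns indexed from 0) and diagonal
    matrices (identified with the sequence of their diagonal entries). *)
Definition smat := nat -> nat -> R.
Definition sdiag := nat -> R.

Definition poch (x : R) (k : nat) : R :=
  List.fold_right Rmult 1%R (List.map (fun i => (x + INR i)%R) (List.seq 0 k)).

Definition hweight (bs cs : list R) (eta : R) (k : nat) : R :=
  (List.fold_right Rmult 1%R (List.map (fun b => poch b k) bs)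
   / List.fold_right Rmult 1%R (List.map (fun c => poch c k) cs)
   * (eta ^ k) / INR (Stdlib.Arith.Factorial.fact k))%R.

Definition moment (w1 w2 : nat -> R) : smat :=
  fun n j => if Nat.even j
             then Series (fun k => (INR k ^ (n + Nat.div2 j) * w1 k)%R)
             else Series (fun k => (INR k ^ (n + Nat.div2 j) * w2 k)%R).

Definition Lam : smat := fun i j => if Nat.eqb j (S i) then 1%R else 0%R.

Definition am (d : sdiag) : sdiag := fun i => d (S i).
Definition ap (d : sdiag) : sdiag := fun i => match i with 0 => 0%R | S i' => d i' end.

(** Subdiagonals: S = I + Lam^T S^[1] + (Lam^T)^2 S^[2] + ..., i.e. S^[k]_i = S_{i+k,i}. *)
Definition subdiag (k : nat) (A : smat) : sdiag := fun i => A (i + k)%nat i.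

Definition theta (f : R -> R -> R) (e1 e2 : R) : R :=
  (e1 * Derive (fun x => f x e2) e1 + e2 * Derive (fun y => f e1 y) e2)%R.

Definition lower_unitri (A : smat) : Prop :=
  (forall i, A i i = 1%R) /\ (forall i j, (i < j)%nat -> A i j = 0%R).


Definition thetaD (D : R -> R -> sdiag) (e1 e2 : R) : sdiag :=
  fun i => theta (fun x y => D x y i) e1 e2.

(** Gauss-Borel factorization M = S^{-1} H St^{-T} with S, St lower unitriangular and
    H diagonal, written in the equivalent (all products are finite sums) form
    S M St^T = H :  sum_{k<=i} sum_{l<=j} S_{ik} M_{kl} St_{jl} = delta_{ij} H_i. *)
Definition gauss_borel (M Sm St : smat) (H : sdiag) : Prop :=
  lower_unitri Sm /\ lower_unitri St /\
  forall i j,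
    sum_f_R0 (fun k => sum_f_R0 (fun l => (Sm i k * M k l * St j l)%R) j) i
    = (if Nat.eqb i j then H i else 0%R).

Definition jacobi4 (ga be al : sdiag) : smat :=
  fun i j => ((if Nat.eqb i (j + 2) then ga j else 0)
            + (if Nat.eqb i (j + 1) then be j else 0)
            + (if Nat.eqb i j then al j else 0)
            + Lam i j)%R.

(** S Lam S^{-1} = J, written as S Lam = J S (S lower unitriangular, J lower
    Hessenberg, so both products are finite sums). *)
Definition step_line (Sm : smat) (ga be al : sdiag) : Prop :=
  forall i j,
    sum_f_R0 (fun k => (Sm i k * Lam k j)%R) i
    = sum_f_R0 (fun k => (jacobi4 ga be al i k * Sm k j)%R) (S i).

From mathcomp Require Import ssreflect ssrfun ssrbool eqtype ssrnat seq fintype bigop ssralg matrix.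
From mathcomp Require Import Rstruct.

Definition lead_minor (A : smat) (n : nat) : R :=
  (\det (\matrix_(i < n, j < n) A (nat_of_ord i) (nat_of_ord j)))%R.

(* Main.v *)
Require Import Defs.
From Stdlib Require Import Reals Lra Lia.
From Coquelicot Require Import Coquelicot.
From mathcomp Require Import ssreflect ssrfun ssrbool eqtype ssrnat seq fintype bigop ssralg matrix perm.
From mathcomp Require Import Rstruct zify.
Open Scope R_scope.


Lemma ex_derive_big (I : Type) (r : seq I) (P : pred I) (G : I -> R -> R) t0 :
  (forall i, ex_derive (G i) t0) ->
  ex_derive (fun t => \big[@GRing.add R/@GRing.zero R]_(i <- r | P i) G i t) t0.
Proof.
move=> HG; elim: r => [|a r IH].
  apply: (ex_derive_ext (fun _ => 0)); first by move=> t; rewrite big_nil.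
  exact: ex_derive_const.
case Pa: (P a).
  apply: (ex_derive_ext (fun t => G a t + \big[@GRing.add R/@GRing.zero R]_(i <- r | P i) G i t)).
    by move=> t; rewrite big_cons Pa.
  exact: ex_derive_plus.
apply: (ex_derive_ext (fun t => \big[@GRing.add R/@GRing.zero R]_(i <- r | P i) G i t)) => //.
by move=> t; rewrite big_cons Pa.
Qed.

Lemma ex_derive_bigM (I : Type) (r : seq I) (P : pred I) (G : I -> R -> R) t0 :
  (forall i, ex_derive (G i) t0) ->
  ex_derive (fun t => \big[@GRing.mul R/@GRing.one R]_(i <- r | P i) G i t) t0.
Proof.
move=> HG; elim: r => [|a r IH].
  apply: (ex_derive_ext (fun _ => 1)); first by move=> t; rewrite big_nil.
  exact: ex_derive_const.
case Pa: (P a).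
  apply: (ex_derive_ext (fun t => G a t * \big[@GRing.mul R/@GRing.one R]_(i <- r | P i) G i t)).
    by move=> t; rewrite big_cons Pa.
  exact: ex_derive_mult.
apply: (ex_derive_ext (fun t => \big[@GRing.mul R/@GRing.one R]_(i <- r | P i) G i t)) => //.
by move=> t; rewrite big_cons Pa.
Qed.

Lemma ex_derive_det n (A : R -> 'M[R]_n) t0 :
  (forall i j, ex_derive (fun t => A t i j) t0) ->
  ex_derive (fun t => determinant (A t)) t0.
Proof.
move=> HA; rewrite /determinant.
apply: ex_derive_big => s.
apply: ex_derive_mult; first exact: ex_derive_const.
apply: ex_derive_bigM => i; exact: HA.
Qed.

Lemma RplusE (x y : R) : Rplus x y = GRing.add x y. Proof. by []. Qed.
Lemma RmultE (x y : R) : Rmult x y = GRing.mul x y. Proof. by []. Qed.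
Lemma RoppE (x : R) : Ropp x = GRing.opp x. Proof. by []. Qed.
Lemma R0E : R0 = GRing.zero. Proof. by []. Qed.

Lemma sumE (f : nat -> R) n : sum_f_R0 f n = \big[@GRing.add R/@GRing.zero R]_(k < n.+1) f k.
Proof.
elim: n => [|n IH]; first by rewrite big_ord_recr big_ord0 /= GRing.add0r.
by rewrite /= IH [in RHS]big_ord_recr.
Qed.

Definition Uf (Sm M : smat) i j := sum_f_R0 (fun k => Sm i k * M k j) i.

Section Alg.
Local Open Scope ring_scope.

Lemma swap_sum (f : nat -> nat -> R) n m :
  sum_f_R0 (fun k => sum_f_R0 (fun l => f k l) m) n =
  sum_f_R0 (fun l => sum_f_R0 (fun k => f k l) n) m.
Proof.
rewrite sumE. under eq_bigr do rewrite sumE.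
rewrite sumE. under [in RHS]eq_bigr do rewrite sumE.
exact: exchange_big.
Qed.

Lemma U_eq (M Sm St : smat) H : gauss_borel M Sm St H ->
  forall i j, (j <= i)%N -> Uf Sm M i j = if Nat.eqb i j then H i else 0.
Proof.
move=> [[S1 S0] [[T1 T0] GB]] i.
have key : forall j, sum_f_R0 (fun l => Uf Sm M i l * St j l) j = if Nat.eqb i j then H i else 0.
  move=> j; rewrite -GB swap_sum. apply: PartSum.sum_eq => l _.
  rewrite /Uf sumE [in RHS]sumE GRing.mulr_suml.
  by apply: eq_bigr => k _; rewrite !RmultE.
elim/ltn_ind => j IH lji.
move: (key j); rewrite sumE big_ord_recr /=.
rewrite big1; last first.
  move=> [l /= ll] _; rewrite IH //; last by apply: leq_trans lji; apply: ltnW.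
  have -> : Nat.eqb i l = false by apply/PeanoNat.Nat.eqb_neq; move/ltP: ll; move/leP: lji; lia.
  by rewrite GRing.mul0r.
by rewrite T1 GRing.mulr1 GRing.add0r.
Qed.

End Alg.

Section Alg2.
Local Open Scope ring_scope.
Lemma uniq_w (M : smat) i : lead_minor M i.+1 <> 0%R ->
  forall w : nat -> R, (forall j, (j <= i)%N -> sum_f_R0 (fun k => (w k * M k j)%R) i = 0%R) ->
  forall k, (k <= i)%N -> w k = 0%R.
Proof.
move=> Hm w Hw k ki.
pose A := \matrix_(a < i.+1, b < i.+1) M (nat_of_ord a) (nat_of_ord b).
have hu : A \in unitmx by rewrite unitmxE GRing.unitfE; apply/eqP.
pose v := \row_(a < i.+1) w (nat_of_ord a).
have hv : v *m A = 0.
  apply/matrixP => x y; rewrite !mxE -[RHS](Hw y) ?sumE; last by rewrite -ltnS.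
  by apply: eq_bigr => a _; rewrite !mxE.
have := mulmxK hu v; rewrite hv mul0mx => v0.
move/matrixP: v0 => /(_ ord0 (inord k)); rewrite !mxE inordK //.
Qed.
End Alg2.

Lemma sum_delta (F : nat -> R) (P : nat -> bool) m n :
  (forall k, P k = true <-> k = m) ->
  sum_f_R0 (fun k => if P k then F k else 0) n = if Nat.leb m n then F m else 0.
Proof.
move=> HP; elim: n => [|n IH] /=.
  case E: (P 0%nat).
    have := proj1 (HP 0%nat) E => <- //.
  case: m HP => [|m] HP //; by have := proj2 (HP 0%nat) erefl; rewrite E.
rewrite IH; case E: (P n.+1).
  have m1 := proj1 (HP _) E; subst m.
  have -> : Nat.leb n.+1 n = false by apply PeanoNat.Nat.leb_gt; lia.
  by rewrite PeanoNat.Nat.leb_refl Rplus_0_l.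
case L: (Nat.leb m n).
  have -> : Nat.leb m n.+1 = true by apply PeanoNat.Nat.leb_le; move/PeanoNat.Nat.leb_le: L; lia.
  by rewrite Rplus_0_r.
case L2: (Nat.leb m n.+1); last by rewrite Rplus_0_r.
have : m = n.+1 by move/PeanoNat.Nat.leb_le: L2; move/PeanoNat.Nat.leb_gt: L; lia.
by move=> e; subst m; have := proj2 (HP _) erefl; rewrite E.
Qed.

Lemma sum_none (F : nat -> R) (P : nat -> bool) n :
  (forall k, P k = false) -> sum_f_R0 (fun k => if P k then F k else 0) n = 0.
Proof.
move=> HP; elim: n => [|n IH] /=; first by rewrite HP.
by rewrite IH HP Rplus_0_r.
Qed.

Lemma SLam (Sm : smat) i j : lower_unitri Sm ->
  sum_f_R0 (fun k => Sm i k * Lam k j) i = match j with 0 => 0 | S j' => Sm i j' end.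
Proof.
move=> [S1 S0].
case: j => [|j].
  rewrite -(sum_none (fun _ => 0) (fun _ => false) i) //.
  apply: PartSum.sum_eq => k _; rewrite /Lam /=; lra.
transitivity (sum_f_R0 (fun k => if Nat.eqb k j then Sm i k else 0) i).
  apply: PartSum.sum_eq => k _; rewrite /Lam /=.
  case E: (Nat.eqb j k); case E': (Nat.eqb k j) => //; try lra.
  - by move/PeanoNat.Nat.eqb_eq: E => e; subst; rewrite PeanoNat.Nat.eqb_refl in E'.
  - by move/PeanoNat.Nat.eqb_eq: E' => e; subst; rewrite PeanoNat.Nat.eqb_refl in E.
rewrite (sum_delta _ _ j) => [|k]; last by split; [move/PeanoNat.Nat.eqb_eq|move=> ->; apply PeanoNat.Nat.eqb_refl].
case L: (Nat.leb j i) => //.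
by rewrite S0 //; move/PeanoNat.Nat.leb_gt: L.
Qed.

Ltac dl := let k := fresh in move=> k; split => [/PeanoNat.Nat.eqb_eq|?]; [lia| apply/PeanoNat.Nat.eqb_eq; lia].

Lemma JSrow (ga be al : sdiag) (Sm : smat) r j :
  sum_f_R0 (fun k => jacobi4 ga be al r k * Sm k j) (S r) =
  (match r with S (S r') => ga r' * Sm r' j | _ => 0 end) +
  (match r with S r' => be r' * Sm r' j | 0 => 0 end) + al r * Sm r j + Sm (S r) j.
Proof.
transitivity (sum_f_R0 (fun k => if Nat.eqb r (Nat.add k 2) then ga k * Sm k j else 0) (S r) +
              sum_f_R0 (fun k => if Nat.eqb r (Nat.add k 1) then be k * Sm k j else 0) (S r) +
              sum_f_R0 (fun k => if Nat.eqb r k then al k * Sm k j else 0) (S r) +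
              sum_f_R0 (fun k => if Nat.eqb k (S r) then Sm k j else 0) (S r)).
  rewrite -!plus_sum; apply: PartSum.sum_eq => k _; rewrite /jacobi4 /Lam.
  by case: (Nat.eqb r (Nat.add k 2)); case: (Nat.eqb r (Nat.add k 1)); case: (Nat.eqb r k); case: (Nat.eqb k (S r)); ring.
have eqn : forall a b, Nat.eqb a b = true <-> a = b by move=> a b; apply PeanoNat.Nat.eqb_eq.
rewrite (sum_delta _ (fun k => Nat.eqb k (S r)) (S r)); last by dl.
rewrite PeanoNat.Nat.leb_refl.
rewrite (sum_delta _ (fun k => Nat.eqb r k) r); last by dl.
have -> : Nat.leb r (S r) = true by apply PeanoNat.Nat.leb_le; lia.
have nz : forall (F : nat -> R) P n, (forall k, P k = false) -> sum_f_R0 (fun k => if P k then F k else 0) n = 0.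
  by move=> F P n HP; apply: sum_none.
case: r => [|[|r]].
{ rewrite (nz _ (fun k => Nat.eqb 0 (Nat.add k 2))); last by move=> k; apply/PeanoNat.Nat.eqb_neq; lia.
  rewrite (nz _ (fun k => Nat.eqb 0 (Nat.add k 1))); last by move=> k; apply/PeanoNat.Nat.eqb_neq; lia.
  by []. }
{ rewrite (nz _ (fun k => Nat.eqb 1 (Nat.add k 2))); last by move=> k; apply/PeanoNat.Nat.eqb_neq; lia.
  rewrite (sum_delta _ (fun k => Nat.eqb 1 (Nat.add k 1)) 0); last by dl.
  by []. }
rewrite (sum_delta _ (fun k => Nat.eqb r.+2 (Nat.add k 2)) r); last by dl.
rewrite (sum_delta _ (fun k => Nat.eqb r.+2 (Nat.add k 1)) (S r)); last by dl.
have -> : Nat.leb r (S (S (S r))) = true by apply PeanoNat.Nat.leb_le; lia.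
have -> : Nat.leb (S r) (S (S (S r))) = true by apply PeanoNat.Nat.leb_le; lia.
by [].
Qed.

Definition Dfb (f : R -> R -> R) e1 e2 :=
  ex_derive (fun x => f x e2) e1 /\ ex_derive (fun y => f e1 y) e2.

Lemma Dfb_plus f g e1 e2 : Dfb f e1 e2 -> Dfb g e1 e2 -> Dfb (fun x y => f x y + g x y) e1 e2.
Proof. by move=> [? ?] [? ?]; split; apply: ex_derive_plus. Qed.
Lemma Dfb_mult f g e1 e2 : Dfb f e1 e2 -> Dfb g e1 e2 -> Dfb (fun x y => f x y * g x y) e1 e2.
Proof. by move=> [? ?] [? ?]; split; apply: ex_derive_mult. Qed.
Lemma Dfb_const c e1 e2 : Dfb (fun _ _ => c) e1 e2.
Proof. by split; apply: ex_derive_const. Qed.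

Lemma theta_plus f g e1 e2 : Dfb f e1 e2 -> Dfb g e1 e2 ->
  theta (fun x y => f x y + g x y) e1 e2 = theta f e1 e2 + theta g e1 e2.
Proof.
move=> [? ?] [? ?]; rewrite /theta.
rewrite (Derive_plus (fun x => f x e2) (fun x => g x e2)) //.
rewrite (Derive_plus (fun y => f e1 y) (fun y => g e1 y)) //.
set a := Derive (fun x => f x e2) e1; set b := Derive (fun x => g x e2) e1.
set c := Derive (fun y => f e1 y) e2; set d := Derive (fun y => g e1 y) e2.
ring.
Qed.

Lemma theta_mult f g e1 e2 : Dfb f e1 e2 -> Dfb g e1 e2 ->
  theta (fun x y => f x y * g x y) e1 e2 = theta f e1 e2 * g e1 e2 + f e1 e2 * theta g e1 e2.
Proof.
move=> [? ?] [? ?]; rewrite /theta.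
rewrite (Derive_mult (fun x => f x e2) (fun x => g x e2)) //.
rewrite (Derive_mult (fun y => f e1 y) (fun y => g e1 y)) //.
set a := Derive (fun x => f x e2) e1; set b := Derive (fun x => g x e2) e1.
set c := Derive (fun y => f e1 y) e2; set d := Derive (fun y => g e1 y) e2.
ring.
Qed.

Lemma theta_const c e1 e2 : theta (fun _ _ => c) e1 e2 = 0.
Proof. by rewrite /theta !Derive_const; ring. Qed.

Lemma theta_sum (F : nat -> R -> R -> R) n e1 e2 :
  (forall k, (k <= n)%coq_nat -> Dfb (F k) e1 e2) ->
  Dfb (fun x y => sum_f_R0 (fun k => F k x y) n) e1 e2 /\
  theta (fun x y => sum_f_R0 (fun k => F k x y) n) e1 e2 = sum_f_R0 (fun k => theta (F k) e1 e2) n.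
Proof.
elim: n => [|n IH] HF /=.
  by split; [apply: HF|].
have [D1 T1] := IH (fun k hk => HF k (Nat.le_trans _ _ _ hk (Nat.le_succ_diag_r n))).
have D2 := HF n.+1 (Nat.le_refl _).
split; first exact: (Dfb_plus _ _ _ _ D1 D2).
rewrite (theta_plus (fun x y => sum_f_R0 (fun k => F k x y) n) (F n.+1)) //.
by rewrite T1.
Qed.

Definition near2 (P : R -> R -> Prop) e1 e2 :=
  exists eps, 0 < eps /\ forall x y, Rabs (x - e1) < eps -> Rabs (y - e2) < eps -> P x y.

Lemma locally_of (P : R -> Prop) e eps : 0 < eps -> (forall x, Rabs (x - e) < eps -> P x) -> locally e P.
Proof.
move=> he HP; exists (mkposreal eps he) => y By; apply: HP; exact: By.
Qed.

Lemma theta_ext_loc f g e1 e2 : near2 (fun x y => f x y = g x y) e1 e2 ->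
  theta f e1 e2 = theta g e1 e2 /\ (Dfb f e1 e2 -> Dfb g e1 e2).
Proof.
move=> [eps [he HP]].
have L1 : locally e1 (fun x => f x e2 = g x e2).
  apply: (locally_of _ _ eps he) => x hx; apply: HP => //; rewrite Rminus_diag Rabs_R0 //.
have L2 : locally e2 (fun y => f e1 y = g e1 y).
  apply: (locally_of _ _ eps he) => y hy; apply: HP => //; rewrite Rminus_diag Rabs_R0 //.
split.
  by rewrite /theta (Derive_ext_loc _ _ _ L1) (Derive_ext_loc _ _ _ L2).
by move=> [? ?]; split; [apply: (ex_derive_ext_loc _ _ _ L1)| apply: (ex_derive_ext_loc _ _ _ L2)].
Qed.

Definition coef (bs cs : list R) (n : nat) : R :=
  List.fold_right Rmult 1 (List.map (fun b => poch b n) bs)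
  / List.fold_right Rmult 1 (List.map (fun c => poch c n) cs) / INR (Stdlib.Arith.Factorial.fact n).

Lemma hweightE bs cs x n : hweight bs cs x n = coef bs cs n * x ^ n.
Proof. rewrite /hweight /coef /Rdiv; ring. Qed.

Lemma le_psum (u : nat -> R) n N : (n <= N)%coq_nat -> Rabs (u n) <= sum_f_R0 (fun k => Rabs (u k)) N.
Proof.
elim: N => [|N IH] hn /=.
  have -> : n = 0%nat by lia. lra.
case: (Nat.eq_dec n N.+1) => [->|hne].
  have := cond_pos_sum (fun k => Rabs (u k)) N (fun k => Rabs_pos _); lra.
have := IH ltac:(lia); have := Rabs_pos (u N.+1); lra.
Qed.

Lemma bounded_of_series u : ex_series u -> exists M, forall n, Rabs (u n) <= M.
Proof.
move=> /ex_series_lim_0 /is_lim_seq_spec hl.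
have [N HN] := hl (mkposreal 1 Rlt_0_1).
exists (1 + sum_f_R0 (fun k => Rabs (u k)) N) => n.
case: (Nat.le_gt_cases N n) => hn.
  have := HN n hn; rewrite /= Rminus_0_r.
  have := cond_pos_sum (fun k => Rabs (u k)) N (fun k => Rabs_pos _); lra.
have := le_psum u n N ltac:(lia); lra.
Qed.

Lemma mom_core bs cs e eps p : 0 < eps ->
  (forall x, Rabs (x - e) < eps -> forall q, ex_series (fun n => INR n ^ q * hweight bs cs x n)) ->
  ex_derive (fun x => Series (fun n => INR n ^ p * hweight bs cs x n)) e /\
  e * Derive (fun x => Series (fun n => INR n ^ p * hweight bs cs x n)) e
  = Series (fun n => INR n ^ (S p) * hweight bs cs e n).
Proof.
move=> he Hc.
pose a n := INR n ^ p * coef bs cs n.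
have EQ : forall x, Series (fun n => INR n ^ p * hweight bs cs x n) = PSeries a x.
  move=> x; apply: Series_ext => n; rewrite hweightE /a; ring.
pose x' := if Rle_dec 0 e then e + eps / 2 else e - eps / 2.
have hx' : Rabs (x' - e) < eps.
  rewrite /x'; destruct (Rle_dec 0 e) as [h|h]; simpl.
    rewrite Rabs_pos_eq; lra.
  rewrite Rabs_left; lra.
have ax' : Rabs e < Rabs x'.
  rewrite /x'; destruct (Rle_dec 0 e) as [h|h]; simpl.
    rewrite !Rabs_pos_eq; lra.
  rewrite !Rabs_left; lra.
have [M HM] : exists M, forall n, Rabs (a n * x' ^ n) <= M.
  have [M HM] := bounded_of_series _ (Hc x' hx' p).
  exists M => n; have := HM n; rewrite hweightE /a.
  by have -> : INR n ^ p * (coef bs cs n * x' ^ n) = INR n ^ p * coef bs cs n * x' ^ n by ring.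
have hrad : Rbar_lt (Rabs e) (CV_radius a).
  have hle : Rbar_le (Rabs x') (CV_radius a).
    apply: (proj1 (CV_radius_bounded a)); exists M => n.
    rewrite Rabs_mult -RPow_abs Rabs_Rabsolu. by rewrite RPow_abs -Rabs_mult.
  apply: (Rbar_lt_le_trans _ (Rbar.Finite (Rabs x'))) => //.
split.
  apply: (ex_derive_ext (PSeries a)); first by move=> t; rewrite EQ.
  exact: ex_derive_PSeries.
rewrite (Derive_ext _ (PSeries a)); last by move=> t; rewrite EQ.
rewrite Derive_PSeries //.
pose b n := INR n * a n.
have hb : ex_pseries b e.
  apply: (ex_series_ext (fun n => INR n ^ (S p) * hweight bs cs e n)); last first.
    apply: Hc; rewrite Rminus_diag Rabs_R0 //.
  move=> n; rewrite hweightE /b /a pow_n_pow /scal /= /mult /=; ring.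
have := PSeries_decr_1 b e hb.
rewrite /b /= Rmult_0_l Rplus_0_l => E2.
have -> : PSeries (PS_derive a) e = PSeries (PS_decr_1 b) e.
  by apply: Series_ext => n; rewrite /PS_derive /PS_decr_1 /b.
rewrite -E2; apply: Series_ext => n; rewrite hweightE /b /a /=; ring.
Qed.

Lemma mom_diff bs1 bs2 cs e1 e2 eps k j : 0 < eps ->
  (forall x y, Rabs (x - e1) < eps -> Rabs (y - e2) < eps -> forall q,
     ex_series (fun n => INR n ^ q * hweight bs1 cs x n) /\
     ex_series (fun n => INR n ^ q * hweight bs2 cs y n)) ->
  let f := fun x y => moment (hweight bs1 cs x) (hweight bs2 cs y) k j in
  (ex_derive (fun x => f x e2) e1 /\ ex_derive (fun y => f e1 y) e2) /\
  theta f e1 e2 = moment (hweight bs1 cs e1) (hweight bs2 cs e2) (S k) j.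
Proof.
move=> he Hc f; rewrite /f /theta /moment.
have z : forall e, Rabs (e - e) < eps by move=> e; rewrite Rminus_diag Rabs_R0.
case: (Nat.even j).
  have [D1 T1] := mom_core bs1 cs e1 eps (k + Nat.div2 j) he (fun x hx q => proj1 (Hc x e2 hx (z e2) q)).
  split; first by split => //; apply: ex_derive_const.
  by rewrite Derive_const -T1 Rmult_0_r Rplus_0_r.
have [D1 T1] := mom_core bs2 cs e2 eps (k + Nat.div2 j) he (fun y hy q => proj2 (Hc e1 y (z e1) hy q)).
split; first by split => //; apply: ex_derive_const.
by rewrite Derive_const -T1 Rmult_0_r Rplus_0_l.
Qed.

Section SD.
Local Open Scope ring_scope.

Lemma S_formula (M Sm St : smat) H i k (hk : (k < i)%N) :
  gauss_borel M Sm St H -> lead_minor M i <> 0 ->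
  Sm i k = (((\row_(c < i) - M i (nat_of_ord c)) *m
             \adj (\matrix_(a < i, b < i) M (nat_of_ord a) (nat_of_ord b))) ord0 (Ordinal hk))
           / \det (\matrix_(a < i, b < i) M (nat_of_ord a) (nat_of_ord b)).
Proof.
move=> GB hm.
have [[S1 S0] _] := GB.
set A := \matrix_(a < i, b < i) M (nat_of_ord a) (nat_of_ord b).
set b := \row_(c < i) - M i (nat_of_ord c).
pose s := \row_(a < i) Sm i (nat_of_ord a).
have hs : s *m A = b.
  apply/matrixP => x c; rewrite !mxE.
  have := U_eq M Sm St H GB i c (ltnW (ltn_ord c)).
  have -> : Nat.eqb i c = false by apply/PeanoNat.Nat.eqb_neq; have := ltn_ord c; lia.
  rewrite /Uf sumE big_ord_recr /= S1 Rmult_1_l => /eqP; rewrite GRing.addr_eq0 => /eqP <-.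
  by apply: eq_bigr => a _; rewrite !mxE.
have := congr1 (mulmx^~ (\adj A)) hs.
rewrite -mulmxA mul_mx_adj mul_mx_scalar => /matrixP /(_ ord0 (Ordinal hk)).
rewrite mxE [in X in X = _ -> _]mxE => <-.
rewrite GRing.mulrC GRing.mulKf //; exact/eqP.
Qed.
End SD.

Section SD2.
Local Open Scope ring_scope.
Lemma S_diff (Mt Smt Stt : R -> smat) (Ht : R -> sdiag) t0 eps : (0 < eps)%R ->
  (forall t, (Rabs (t - t0) < eps)%R -> gauss_borel (Mt t) (Smt t) (Stt t) (Ht t) /\
     forall n, lead_minor (Mt t) (S n) <> 0%R) ->
  (forall k j, ex_derive (fun t => Mt t k j) t0) ->
  forall i k, ex_derive (fun t => Smt t i k) t0.
Proof.
move=> he Hloc HM i k.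
have L : forall P : R -> Prop, (forall t, (Rabs (t - t0) < eps)%R -> P t) -> locally t0 P.
  by move=> P HP; apply: (locally_of _ _ eps he).
have z : (Rabs (t0 - t0) < eps)%R by rewrite Rminus_diag Rabs_R0.
case: (ltngtP k i) => hk.
-
  case: i hk => [//|i'] hk.
  pose A t := \matrix_(a < i'.+1, b < i'.+1) Mt t (nat_of_ord a) (nat_of_ord b).
  apply: (ex_derive_ext_loc (fun t =>
    (((\row_(c < i'.+1) - Mt t i'.+1 (nat_of_ord c)) *m \adj (A t)) ord0 (Ordinal hk)) / \det (A t))).
    apply: L => t ht; have [GB hm] := Hloc t ht.
    by rewrite (S_formula _ _ _ _ _ _ hk GB (hm i')).
  apply: ex_derive_div.
  + apply: (ex_derive_ext (fun t => \big[@GRing.add R/@GRing.zero R]_(c < i'.+1)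
        ((- Mt t i'.+1 (nat_of_ord c)) * ((-1) ^+ (k + c) * \det (row' (Ordinal hk) (col' c (A t))))))).
      by move=> t; rewrite !mxE; apply: eq_bigr => c _; rewrite !mxE.
    apply: ex_derive_big => c.
    apply: ex_derive_mult.
      by apply: (ex_derive_ext (fun t => Ropp (Mt t i'.+1 c))) => //; apply: ex_derive_opp.
    apply: ex_derive_mult; first exact: ex_derive_const.
    apply: ex_derive_det => x y.
    by apply: (ex_derive_ext (fun t => Mt t (lift (Ordinal hk) x) (lift c y))) => // t; rewrite !mxE.
  + apply: ex_derive_det => x y.
    by apply: (ex_derive_ext (fun t => Mt t x y)) => // t; rewrite !mxE.
  + have [_ hm] := Hloc t0 z; exact: (hm i').
- apply: (ex_derive_ext_loc (fun _ : R => GRing.zero : R)); last exact: ex_derive_const.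
  apply: L => t ht; have [[[_ S0] _] _] := Hloc t ht.
  by rewrite S0 //; apply/ltP.
- apply: (ex_derive_ext_loc (fun _ : R => Rdefinitions.IZR 1)); last exact: ex_derive_const.
  apply: L => t ht; have [[[S1 _] _] _] := Hloc t ht.
  by rewrite hk S1.
Qed.
End SD2.

Lemma shift_sum (f g : nat -> R) n :
  sum_f_R0 (fun k => (match k with 0%nat => 0 | S k' => f k' end) * g k) (S n)
  = sum_f_R0 (fun k => f k * g (S k)) n.
Proof. elim: n => [|n IH] /=; first ring. by rewrite -IH /=. Qed.

Lemma sum_lin4 (a b c e : nat -> R) (d : R) n :
  sum_f_R0 (fun k => a k + b k - c k - d * e k) n =
  sum_f_R0 a n + sum_f_R0 b n - sum_f_R0 c n - d * sum_f_R0 e n.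
Proof. elim: n => [|n IH] /=; first ring. rewrite IH; ring. Qed.

Lemma sum_lin4' (a b c e : nat -> R) (x y z : R) n :
  sum_f_R0 (fun k => x * a k + y * b k + z * c k + e k) n =
  x * sum_f_R0 a n + y * sum_f_R0 b n + z * sum_f_R0 c n + sum_f_R0 e n.
Proof. elim: n => [|n IH] /=; first ring. rewrite IH; ring. Qed.

Lemma ext_sum (Sm M : smat) q N j : lower_unitri Sm -> (q <= N)%coq_nat ->
  sum_f_R0 (fun k => Sm q k * M k j) N = Uf Sm M q j.
Proof.
move=> [S1 S0]; elim: N => [|N IH] hq.
  have -> : q = 0%nat by lia. by [].
case: (Nat.eq_dec q N.+1) => [->|hne]; first by [].
rewrite /= IH; last lia.
rewrite S0; last lia. ring.
Qed.

Lemma step0 (Sm : smat) ga be al r : lower_unitri Sm -> step_line Sm ga be al ->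
  (match r with 0%nat => 0 | S r' => Sm r r' end) = al r + Sm (S r) r.
Proof.
move=> LU Hs; have := Hs r r; rewrite SLam // JSrow.
have [S1 S0] := LU.
case: r => [|[|r]] /=; rewrite ?S1 => ->.
- ring.
- rewrite S0; [ring|lia].
- rewrite S0; last lia. rewrite S0; last lia. ring.
Qed.

Lemma step1 (Sm : smat) ga be al r : lower_unitri Sm -> step_line Sm ga be al ->
  (match r with 0%nat => 0 | S r' => Sm (S r) r' end) = be r + al (S r) * Sm (S r) r + Sm (S (S r)) r.
Proof.
move=> LU Hs; have := Hs (S r) r; rewrite SLam // JSrow.
have [S1 S0] := LU.
case: r => [|r] /=; rewrite ?S1 => ->.
- ring.
- rewrite S0; [ring|lia].
Qed.

Lemma step2 (Sm : smat) ga be al r : lower_unitri Sm -> step_line Sm ga be al ->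
  (match r with 0%nat => 0 | S r' => Sm (S (S r)) r' end) =
  ga r + be (S r) * Sm (S r) r + al (S (S r)) * Sm (S (S r)) r + Sm (S (S (S r))) r.
Proof.
move=> LU Hs; have := Hs (S (S r)) r; rewrite SLam // JSrow.
have [S1 S0] := LU.
rewrite S1 => ->; ring.
Qed.

Lemma gammaH (M Sm St : smat) H ga be al r : gauss_borel M Sm St H -> step_line Sm ga be al ->
  (forall k j, M (S k) j = M k (S (S j))) ->
  ga r * H r = H (S (S r)).
Proof.
move=> GB Hs Msh.
have LU := proj1 GB.
have E : sum_f_R0 (fun k => sum_f_R0 (fun l => Sm (S (S r)) l * Lam l k) (S (S r)) * M k r) (S (S (S r)))
       = sum_f_R0 (fun k => sum_f_R0 (fun l => jacobi4 ga be al (S (S r)) l * Sm l k) (S (S (S r))) * M k r) (S (S (S r))).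
  by apply: PartSum.sum_eq => k _; rewrite Hs.
have UE : forall q j, (j <= q)%N -> Uf Sm M q j = if Nat.eqb q j then H q else 0 := U_eq M Sm St H GB.
have L : sum_f_R0 (fun k => sum_f_R0 (fun l => Sm (S (S r)) l * Lam l k) (S (S r)) * M k r) (S (S (S r))) = H (S (S r)).
  rewrite (PartSum.sum_eq _ (fun k => (match k with 0%nat => 0 | S k' => Sm (S (S r)) k' end) * M k r)); last first.
    by move=> k _; rewrite SLam.
  rewrite shift_sum.
  rewrite (PartSum.sum_eq _ (fun k => Sm (S (S r)) k * M k (S (S r)))); last by move=> k _; rewrite Msh.
  rewrite -/(Uf Sm M (S (S r)) (S (S r))) UE // PeanoNat.Nat.eqb_refl //.
have R : sum_f_R0 (fun k => sum_f_R0 (fun l => jacobi4 ga be al (S (S r)) l * Sm l k) (S (S (S r))) * M k r) (S (S (S r))) = ga r * H r.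
  rewrite (PartSum.sum_eq _ (fun k => ga r * (Sm r k * M k r) + be (S r) * (Sm (S r) k * M k r)
        + al (S (S r)) * (Sm (S (S r)) k * M k r) + Sm (S (S (S r))) k * M k r)); last first.
    by move=> k _; rewrite JSrow; ring.
  rewrite sum_lin4' !ext_sum //; try lia.
  rewrite !UE; try (apply/leP; lia).
  rewrite !PeanoNat.Nat.eqb_refl.
  have -> : Nat.eqb (S r) r = false by apply/PeanoNat.Nat.eqb_neq; lia.
  have -> : Nat.eqb (S (S r)) r = false by apply/PeanoNat.Nat.eqb_neq; lia.
  have -> : Nat.eqb (S (S (S r))) r = false by apply/PeanoNat.Nat.eqb_neq; lia.
  ring.
rewrite -R -L; exact: (esym E).
Qed.

Lemma Hnz (M Sm St : smat) H r : gauss_borel M Sm St H -> lead_minor M (S r) <> 0 -> H r <> 0.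
Proof.
move=> GB hm H0.
have [[S1 _] _] := GB.
have h : Sm r r = 0.
  apply: (uniq_w M r hm (fun k => Sm r k)); last exact: leqnn.
  move=> j hj; have := U_eq M Sm St H GB r j hj; rewrite /Uf => ->.
  by case: (Nat.eqb r j).
rewrite S1 in h; lra.
Qed.

Lemma uniq_w' (M : smat) i : lead_minor M (S i) <> 0 ->
  forall w : nat -> R, (forall j, (j <= i)%N -> sum_f_R0 (fun k => w k * M k j) i = 0) ->
  forall k, (k <= i)%N -> w k = 0.
Proof. exact: uniq_w. Qed.

Lemma star (Mom Sm St : R -> R -> smat) (H : R -> R -> sdiag) e1 e2 eps r :
  0 < eps ->
  (forall x y, Rabs (x - e1) < eps -> Rabs (y - e2) < eps ->
     gauss_borel (Mom x y) (Sm x y) (St x y) (H x y)) ->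
  lead_minor (Mom e1 e2) (S r) <> 0 ->
  (forall k j, Dfb (fun x y => Mom x y k j) e1 e2 /\
     theta (fun x y => Mom x y k j) e1 e2 = Mom e1 e2 (S k) j) ->
  (forall q k, Dfb (fun x y => Sm x y q k) e1 e2) ->
  forall k, (k <= r)%coq_nat ->
  theta (fun x y => Sm x y r k) e1 e2 + (match k with 0%nat => 0 | S k' => Sm e1 e2 r k' end)
  = Sm e1 e2 (S r) k + thetaD H e1 e2 r / H e1 e2 r * Sm e1 e2 r k.
Proof.
move=> he Hgb hm HM HS.
have z : forall e, Rabs (e - e) < eps by move=> e; rewrite Rminus_diag Rabs_R0.
have GB := Hgb e1 e2 (z e1) (z e2).
have [[S1 S0] _] := GB.
have hH := Hnz _ _ _ _ r GB hm.
set M := Mom e1 e2.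
set tHH := thetaD H e1 e2 r / H e1 e2 r.
have UE := U_eq _ _ _ _ GB.
have Th1 : forall j, (j <= r)%coq_nat ->
   theta (fun x y => Uf (Sm x y) (Mom x y) r j) e1 e2 =
   sum_f_R0 (fun k => theta (fun x y => Sm x y r k) e1 e2 * M k j + Sm e1 e2 r k * M (S k) j) r.
  move=> j hj; rewrite /Uf.
  have [_ ->] := theta_sum (fun k x y => Sm x y r k * Mom x y k j) r e1 e2
     (fun k _ => Dfb_mult _ _ _ _ (HS r k) (proj1 (HM k j))).
  apply: PartSum.sum_eq => k _.
  rewrite (theta_mult (fun x y => Sm x y r k) (fun x y => Mom x y k j)) //; last exact: (proj1 (HM k j)).
  by rewrite (proj2 (HM k j)).
have Th2 : forall j, (j <= r)%coq_nat ->
   theta (fun x y => Uf (Sm x y) (Mom x y) r j) e1 e2 =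
   if Nat.eqb r j then thetaD H e1 e2 r else 0.
  move=> j hj.
  have [-> _] := theta_ext_loc (fun x y => Uf (Sm x y) (Mom x y) r j)
                   (fun x y => if Nat.eqb r j then H x y r else 0) e1 e2
                   (ex_intro _ eps (conj he (fun x y hx hy => U_eq _ _ _ _ (Hgb x y hx hy) r j (introT leP hj)))).
  case: (Nat.eqb r j) => //; exact: theta_const.
have key : forall k, (k <= r)%N ->
   (theta (fun x y => Sm x y r k) e1 e2 + (match k with 0%nat => 0 | S k' => Sm e1 e2 r k' end)
    - Sm e1 e2 (S r) k - tHH * Sm e1 e2 r k) = 0.
  apply: (uniq_w' M r hm) => j /leP hj.
  rewrite (PartSum.sum_eq _ (fun k => theta (fun x y => Sm x y r k) e1 e2 * M k j
      + (match k with 0%nat => 0 | S k' => Sm e1 e2 r k' end) * M k j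
      - Sm e1 e2 (S r) k * M k j - tHH * (Sm e1 e2 r k * M k j))); last by move=> k _; ring.
  rewrite sum_lin4.
  have A1 := Th1 j hj; rewrite Th2 // plus_sum in A1.
  have B1 := shift_sum (fun k => Sm e1 e2 r k) (fun k => M k j) r.
  rewrite /= S1 Rmult_1_l in B1.
  have C1 := UE (S r) j (introT leP (le_S _ _ hj)).
  have ne : Nat.eqb (S r) j = false by apply/PeanoNat.Nat.eqb_neq; lia.
  rewrite ne /Uf /= S1 Rmult_1_l in C1.
  have D1 := UE r j (introT leP hj); rewrite /Uf in D1.
  have GZ : (GRing.zero : R) = 0 by [].
  rewrite -/M ?GZ in C1 D1.
  rewrite D1.
  have E1 : (if Nat.eqb r j then thetaD H e1 e2 r else 0) - tHH * (if Nat.eqb r j then H e1 e2 r else 0) = 0.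
    case: (Nat.eqb r j); last ring.
    rewrite /tHH; field; exact: hH.
  lra.
move=> k hk; have := key k (introT leP hk).
have -> : theta (fun x y => Sm x y r k) e1 e2 = Derive (fun x => Sm x e2 r k) e1 * e1 + Derive (fun y => Sm e1 y r k) e2 * e2 by rewrite /theta; ring.
lra.
Qed.
Lemma ap_sub1 (A : smat) i : ap (subdiag 1 A) i = match i with 0%nat => 0 | S i' => A i i' end.
Proof. case: i => //= i'; rewrite /subdiag; f_equal; lia. Qed.
Lemma ap_sub2 (A : smat) i : ap (subdiag 2 A) i = match i with 0%nat => 0 | S i' => A (S i) i' end.
Proof. case: i => //= i'; rewrite /subdiag; f_equal; lia. Qed.

Theorem mainTheorem17
  (bs1 bs2 cs : list R)
  (* the Pochhammer symbols (c_j)_k never vanish *)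
  (Hc : forall c, List.In c cs -> forall n : nat, c <> - INR n)
  (* U : an open set of parameters (eta1, eta2) *)
  (U : R -> R -> Prop)
  (HUopen : forall e1 e2, U e1 e2 ->
     exists eps, 0 < eps /\
       forall x y, Rabs (x - e1) < eps -> Rabs (y - e2) < eps -> U x y)
  (* the moment series converge on U *)
  (Hconv : forall e1 e2, U e1 e2 -> forall p : nat,
     ex_series (fun k => INR k ^ p * hweight bs1 cs e1 k) /\
     ex_series (fun k => INR k ^ p * hweight bs2 cs e2 k))
  (* all leading principal minors of the moment matrix are nonzero on U *)
  (Hminor : forall e1 e2, U e1 e2 -> forall n : nat,
     lead_minor (moment (hweight bs1 cs e1) (hweight bs2 cs e2)) (S n) <> 0)
  (* Gauss-Borel factorization M = S^{-1} H St^{-T} *)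
  (Sm St : R -> R -> smat) (H : R -> R -> sdiag)
  (Hfact : forall e1 e2, U e1 e2 ->
     gauss_borel (moment (hweight bs1 cs e1) (hweight bs2 cs e2))
                 (Sm e1 e2) (St e1 e2) (H e1 e2))
  (* S Lam S^{-1} = (Lam^T)^2 gamma + Lam^T beta + alpha + Lam *)
  (al be ga : R -> R -> sdiag)
  (Hstep : forall e1 e2, U e1 e2 ->
     step_line (Sm e1 e2) (ga e1 e2) (be e1 e2) (al e1 e2)) :
  forall e1 e2, U e1 e2 ->
  let S1 := fun x y => subdiag 1 (Sm x y) in
  let S2 := fun x y => subdiag 2 (Sm x y) in
  let tHH := fun i => thetaD H e1 e2 i / H e1 e2 i in
  forall i : nat,
    (* alpha = (theta H) H^{-1} = a_+ S^[1] - S^[1] *)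
    al e1 e2 i = tHH i /\
    tHH i = ap (S1 e1 e2) i - S1 e1 e2 i /\
    (* beta = - theta S^[1] = a_+ S^[2] - S^[2] - S^[1] a_-((theta H) H^{-1}) *)
    be e1 e2 i = - thetaD S1 e1 e2 i /\
    - thetaD S1 e1 e2 i = ap (S2 e1 e2) i - S2 e1 e2 i - S1 e1 e2 i * am tHH i /\
    (* gamma = - theta S^[2] + (theta a_- S^[1]) S^[1] = H^{-1} a_-^2 H *)
    ga e1 e2 i = - thetaD S2 e1 e2 i
                 + thetaD (fun x y => am (S1 x y)) e1 e2 i * S1 e1 e2 i /\
    - thetaD S2 e1 e2 i + thetaD (fun x y => am (S1 x y)) e1 e2 i * S1 e1 e2 i
      = / H e1 e2 i * am (am (H e1 e2)) i.
Proof.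
move=> e1 e2 hU S1 S2 tHH i.
have [eps [he HN]] := HUopen e1 e2 hU.
have z : forall e, Rabs (e - e) < eps by move=> e; rewrite Rminus_diag Rabs_R0.
pose Mom := fun x y => moment (hweight bs1 cs x) (hweight bs2 cs y).
have HM : forall k j, Dfb (fun x y => Mom x y k j) e1 e2 /\
     theta (fun x y => Mom x y k j) e1 e2 = Mom e1 e2 (S k) j.
  move=> k j; exact: (mom_diff bs1 bs2 cs e1 e2 eps k j he (fun x y hx hy q => Hconv x y (HN x y hx hy) q)).
have Hgb : forall x y, Rabs (x - e1) < eps -> Rabs (y - e2) < eps ->
     gauss_borel (Mom x y) (Sm x y) (St x y) (H x y).
  by move=> x y hx hy; apply: Hfact; apply: HN.
have HS : forall q k, Dfb (fun x y => Sm x y q k) e1 e2.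
  move=> q k; split.
    apply: (S_diff (fun t => Mom t e2) (fun t => Sm t e2) (fun t => St t e2) (fun t => H t e2) e1 eps he).
      move=> t ht; split; first exact: Hgb.
      by move=> n; apply: Hminor; apply: HN.
    by move=> k' j'; exact: (proj1 (proj1 (HM k' j'))).
  apply: (S_diff (fun t => Mom e1 t) (fun t => Sm e1 t) (fun t => St e1 t) (fun t => H e1 t) e2 eps he).
    move=> t ht; split; first exact: Hgb.
    by move=> n; apply: Hminor; apply: HN.
  by move=> k' j'; exact: (proj2 (proj1 (HM k' j'))).
have GB := Hfact e1 e2 hU.
have LU := proj1 GB.
have Hs := Hstep e1 e2 hU.
pose s r k := Sm e1 e2 r k.
pose th r k := theta (fun x y => Sm x y r k) e1 e2.
pose T r := thetaD H e1 e2 r / H e1 e2 r.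
have st r k : (k <= r)%coq_nat -> th r k + (match k with 0%nat => 0 | S k' => Sm e1 e2 r k' end)
   = Sm e1 e2 (S r) k + T r * Sm e1 e2 r k.
  exact: (star Mom Sm St H e1 e2 eps r he Hgb (Hminor e1 e2 hU r) HM HS k).
have th0 r : th r r = 0.
  rewrite /th.
  have [-> _] := theta_ext_loc (fun x y => Sm x y r r) (fun _ _ => 1) e1 e2
     (ex_intro _ eps (conj he (fun x y hx hy => proj1 (proj1 (Hgb x y hx hy)) r))).
  exact: theta_const.
have S11 r : Sm e1 e2 r r = 1 := proj1 LU r.
have c1 r : al e1 e2 r = T r.
  have := step0 _ _ _ _ r LU Hs; have := st r r (le_n r); rewrite th0 S11; lra.
have c3 r : be e1 e2 r = - th (S r) r.
  have := step1 _ _ _ _ r LU Hs; have := st (S r) r (le_S _ _ (le_n r)); rewrite c1; lra.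
have c5 : ga e1 e2 i = - th (S (S i)) i + th (S (S i)) (S i) * Sm e1 e2 (S i) i.
  have := step2 _ _ _ _ i LU Hs; have := st (S (S i)) i ltac:(lia); rewrite c1 c3; lra.
have Msh : forall k j, Mom e1 e2 (S k) j = Mom e1 e2 k (S (S j)).
  by move=> k j; rewrite /Mom /moment /= -plus_n_Sm.
have gH := gammaH _ _ _ _ _ _ _ i GB Hs Msh.
have hH := Hnz _ _ _ _ i GB (Hminor e1 e2 hU i).
have E1 : forall f : nat -> nat -> R, subdiag 1 (fun a b => f a b) i = f (S i) i.
  by move=> f; rewrite /subdiag; f_equal; lia.
have tS1 : thetaD S1 e1 e2 i = th (S i) i.
  rewrite /thetaD /S1 /subdiag /th; have -> : Nat.add i 1 = S i by lia. by [].
have tS2 : thetaD S2 e1 e2 i = th (S (S i)) i.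
  rewrite /thetaD /S2 /subdiag /th; have -> : Nat.add i 2 = S (S i) by lia. by [].
have tS1a : thetaD (fun x y => am (S1 x y)) e1 e2 i = th (S (S i)) (S i).
  rewrite /thetaD /S1 /am /subdiag /th; have -> : Nat.add (S i) 1 = S (S i) by lia. by [].
have eS1 : S1 e1 e2 i = Sm e1 e2 (S i) i by rewrite /S1 /subdiag; f_equal; lia.
have eS2 : S2 e1 e2 i = Sm e1 e2 (S (S i)) i by rewrite /S2 /subdiag; f_equal; lia.
have aS1 : ap (S1 e1 e2) i = match i with 0%nat => 0 | S i' => Sm e1 e2 i i' end by rewrite /S1 ap_sub1.
have aS2 : ap (S2 e1 e2) i = match i with 0%nat => 0 | S i' => Sm e1 e2 (S i) i' end by rewrite /S2 ap_sub2.
have tH : forall r, tHH r = T r by [].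
have amt : am tHH i = T (S i) by [].
rewrite tS1 tS2 tS1a eS1 eS2 aS1 aS2 !tH amt.
have := step0 _ _ _ _ i LU Hs; have := st (S i) i (le_S _ _ (le_n i)).
have := st i i (le_n i); rewrite th0 S11 => A B C.
split; first exact: c1.
split; first lra.
split; first exact: c3.
split; first lra.
split; first exact: c5.
rewrite -c5 /am -gH; field; exact: hH.
Qed.
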